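(* Let $\mathbf{x}_1,\ldots,\mathbf{x}_n\in\mathbb{R}^p$, let $\|\cdot\|$ be an arbitrary norm on $\mathbb{R}^p$, and let $w_{ij}\ge 0$ ($1\le i<j\le n$) be weights. Consider the graph on vertex set $\{1,\dots,n\}$ with an edge between $i$ and $j$ whenever $w_{ij}>0$, and suppose this graph is connected. Let $\bar{\mathbf{x}}=\frac1n\sum_{i=1}^n\mathbf{x}_i$ and let $\bar{\mathbf{X}}\in\mathbb{R}^{p\times n}$ be the matrix each of whose columns equals $\bar{\mathbf{x}}$. Then there exists $\gamma_0\ge 0$ such that for all $\gamma\ge\gamma_0$, $\bar{\mathbf{X}}$ minimizes $$F_\gamma(\mathbf{U})=\frac12\sum_{i=1}^n\|\mathbf{x}_i-\mathbf{u}_i\|_2^2+\gamma\sum_{i<j}w_{ij}\|\mathbf{u}_i-\mathbf{u}_j\|.$$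
   Context: $\mathbf{U}=(\mathbf{u}_1,\ldots,\mathbf{u}_n)\in\mathbb{R}^{p\times n}$ with $\mathbf{u}_i$ its $i$th column. *)

(* Defs.v *)
From mathcomp Require Import ssreflect ssrbool ssrnat eqtype fintype.
From Stdlib Require Import Reals Relations.
Open Scope R_scope.

Definition vec (p : nat) := 'I_p -> R.

Definition sumI {n : nat} (f : 'I_n -> R) : R :=
  List.fold_right Rplus 0 (List.map f (enum 'I_n)).

Definition vsub {p} (u v : vec p) : vec p := fun k => u k - v k.
Definition vscale {p} (a : R) (u : vec p) : vec p := fun k => a * u k.
Definition vadd {p} (u v : vec p) : vec p := fun k => u k + v k.

Definition sqnorm2 {p} (u : vec p) : R := sumI (fun k => u k * u k).

Definition is_norm {p} (nrm : vec p -> R) : Prop :=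
  (forall u, nrm u = 0 -> forall k, u k = 0) /\
  (forall a u, nrm (vscale a u) = Rabs a * nrm u) /\
  (forall u v, nrm (vadd u v) <= nrm u + nrm v).

(* weight graph: edge {i,j} iff w_ij > 0, weights used only for i < j *)
Definition wedge {n} (w : 'I_n -> 'I_n -> R) (i j : 'I_n) : Prop :=
  (ltn i j /\ 0 < w i j) \/ (ltn j i /\ 0 < w j i).

Definition connected_w {n} (w : 'I_n -> 'I_n -> R) : Prop :=
  forall i j : 'I_n, clos_refl_trans 'I_n (wedge w) i j.

Definition mean {n p} (x : 'I_n -> vec p) : vec p :=
  fun k => / INR n * sumI (fun i => x i k).

Definition Fgamma {n p} (nrm : vec p -> R) (x : 'I_n -> vec p)
  (w : 'I_n -> 'I_n -> R) (gamma : R) (U : 'I_n -> vec p) : R :=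
  / 2 * sumI (fun i => sqnorm2 (vsub (x i) (U i)))
  + gamma * sumI (fun i => sumI (fun j =>
        if ltn i j then w i j * nrm (vsub (U i) (U j)) else 0)).

(* Main.v *)
Require Import Defs.
From mathcomp Require Import ssreflect ssrbool ssrnat eqtype fintype.
From Stdlib Require Import Reals Relations.
Open Scope R_scope.
From mathcomp Require Import seq.
From Stdlib Require Import Lra FunctionalExtensionality.

Section L.
Context {I : Type}.
Definition lsum (l : list I) (f : I -> R) := List.fold_right Rplus 0 (List.map f l).
Lemma lsum_le l f g : (forall i, f i <= g i) -> lsum l f <= lsum l g.
Proof. rewrite /lsum; elim: l => //= [|a l IH] H; [lra|]. have := H a; have := IH H; lra. Qed.
Lemma lsum_add l f g : lsum l (fun i => f i + g i) = lsum l f + lsum l g.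
Proof. rewrite /lsum; elim: l => //= [|a l IH]; [lra|]. rewrite IH; lra. Qed.
Lemma lsum_scal l c f : lsum l (fun i => c * f i) = c * lsum l f.
Proof. rewrite /lsum; elim: l => //= [|a l IH]; [lra|]. rewrite IH; lra. Qed.
Lemma lsum_ge0 l f : (forall i, 0 <= f i) -> 0 <= lsum l f.
Proof. rewrite /lsum; elim: l => //= [|a l IH] H; [lra|]. have := H a; have := IH H; lra. Qed.
Lemma lsum_ext l f g : (forall i, f i = g i) -> lsum l f = lsum l g.
Proof. rewrite /lsum; elim: l => //= a l IH H. by rewrite IH // H. Qed.
Lemma lsum_const l c : lsum l (fun _ => c) = INR (length l) * c.
Proof. rewrite /lsum; elim: l => //= [|a l IH]; [lra|]. rewrite IH; move: (length l) => m; case: m => [|m] /=; lra. Qed.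
End L.

Lemma lsum_swap (I J : Type) l1 l2 (f : I -> J -> R) :
  lsum l1 (fun i => lsum l2 (fun j => f i j)) = lsum l2 (fun j => lsum l1 (fun i => f i j)).
Proof.
elim: l1 => [|a l IH].
  rewrite (lsum_ext l2 (fun j => lsum [::] (fun i => f i j)) (fun _ => 0)) // lsum_const /lsum /=; lra.
rewrite {1}/lsum /= -/(lsum _ _) IH.
rewrite -lsum_add. apply: lsum_ext => j. by rewrite /lsum.
Qed.

Lemma lsum_term (I : eqType) (l : list I) f i : (forall j, 0 <= f j) -> i \in l -> f i <= lsum l f.
Proof.
move=> H; rewrite /lsum; elim: l => //= a l IH; rewrite in_cons => /orP [/eqP ->|/IH];
 have := lsum_ge0 l f H; rewrite /lsum => ?; have := H a; lra.
Qed.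

Lemma sumIE n (f : 'I_n -> R) : sumI f = lsum (enum 'I_n) f.
Proof. by []. Qed.
Section N.
Context {p : nat} (nrm : vec p -> R) (Hn : is_norm nrm).
Definition zv : vec p := fun _ => 0.
Lemma nrm_z : nrm zv = 0.
Proof.
case: Hn => _ [Hs _]. have -> : zv = vscale 0 zv by apply: functional_extensionality => k; rewrite /vscale /zv; ring.
rewrite Hs Rabs_R0; ring.
Qed.
Lemma nrm_ge0 u : 0 <= nrm u.
Proof.
case: Hn => _ [Hs Ht]. have := Ht u (vscale (-1) u).
have -> : vadd u (vscale (-1) u) = zv by apply: functional_extensionality => k; rewrite /vscale /zv /vadd; ring.
rewrite nrm_z Hs Rabs_Ropp Rabs_R1; lra.
Qed.
Lemma nrm_sym u v : nrm (vsub u v) = nrm (vsub v u).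
Proof.
case: Hn => _ [Hs Ht].
have -> : vsub u v = vscale (-1) (vsub v u) by apply: functional_extensionality => k; rewrite /vscale /vsub; ring.
rewrite Hs Rabs_Ropp Rabs_R1; ring.
Qed.
Lemma nrm_tri u v w : nrm (vsub u w) <= nrm (vsub u v) + nrm (vsub v w).
Proof.
case: Hn => _ [Hs Ht].
have -> : vsub u w = vadd (vsub u v) (vsub v w) by apply: functional_extensionality => k; rewrite /vadd /vsub; ring.
exact: Ht.
Qed.
Lemma nrm_rev u v : nrm u - nrm v <= nrm (vsub u v).
Proof.
case: Hn => _ [Hs Ht].
have := Ht (vsub u v) v.
have -> : vadd (vsub u v) v = u by apply: functional_extensionality => k; rewrite /vadd /vsub; ring.
lra.
Qed.
Definition delta (k : 'I_p) : vec p := fun j => if j == k then 1 else 0.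
Lemma nrm_upper v : nrm v <= sumI (fun k => Rabs (v k) * nrm (delta k)).
Proof.
case: Hn => _ [Hs Ht].
have key : forall l : seq 'I_p, uniq l ->
  nrm (fun k => if k \in l then v k else 0) <= lsum l (fun k => Rabs (v k) * nrm (delta k)).
  elim=> [|a l IH] /=.
    move=> _; have := nrm_z; rewrite /zv /lsum /= => ->; lra.
  move=> /andP [al ul].
  have -> : (fun k => if k \in a :: l then v k else 0) =
     vadd (vscale (v a) (delta a)) (fun k => if k \in l then v k else 0).
    apply: functional_extensionality => k; rewrite /vadd /vscale /delta in_cons.
    case: (eqVneq k a) => [->|ka] /=; first by rewrite (negbTE al); ring.
    ring.
  have := Ht (vscale (v a) (delta a)) (fun k => if k \in l then v k else 0).
  rewrite Hs /lsum /= -/(lsum _ _). move: (IH ul) => h1 h2; apply: Rle_trans h2 _; apply: Rplus_le_compat_l; exact: h1.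
have := key _ (enum_uniq 'I_p).
have -> : (fun k => if k \in enum 'I_p then v k else 0) = v.
  by apply: functional_extensionality => k; rewrite mem_enum.
by [].
Qed.
End N.
Section SI.
Context {n : nat}.
Implicit Types f g : 'I_n -> R.
Lemma sumI_le f g : (forall i, f i <= g i) -> sumI f <= sumI g. Proof. exact: lsum_le. Qed.
Lemma sumI_add f g : sumI (fun i => f i + g i) = sumI f + sumI g. Proof. exact: lsum_add. Qed.
Lemma sumI_scal c f : sumI (fun i => c * f i) = c * sumI f. Proof. exact: lsum_scal. Qed.
Lemma sumI_ge0 f : (forall i, 0 <= f i) -> 0 <= sumI f. Proof. exact: lsum_ge0. Qed.
Lemma sumI_ext f g : (forall i, f i = g i) -> sumI f = sumI g. Proof. exact: lsum_ext. Qed.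
Lemma sumI_term f i : (forall j, 0 <= f j) -> f i <= sumI f.
Proof. move=> H; apply: lsum_term => //; by rewrite mem_enum. Qed.
Lemma sumI_const c : sumI (fun _ : 'I_n => c) = INR n * c.
Proof. change (lsum (enum 'I_n) (fun _ => c) = INR n * c). rewrite lsum_const. have -> : length (enum 'I_n) = n; last done.
have E : forall T (l : seq T), length l = size l by move=> T; elim=> //= a l ->.
by rewrite E size_enum_ord. Qed.
End SI.
Lemma sumI_swap n m (f : 'I_n -> 'I_m -> R) :
  sumI (fun i => sumI (fun j => f i j)) = sumI (fun j => sumI (fun i => f i j)).
Proof. exact: lsum_swap. Qed.
Lemma sumI0 (f : 'I_0 -> R) : sumI f = 0.
Proof. rewrite /sumI. have -> : enum 'I_0 = [::] by apply: size0nil; rewrite size_enum_ord. done. Qed.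
Section Main.
Context (n p : nat) (x : 'I_n -> vec p) (nrm : vec p -> R) (w : 'I_n -> 'I_n -> R).
Hypothesis Hn : is_norm nrm.
Hypothesis Hw : forall i j : 'I_n, ltn i j -> 0 <= w i j.

Definition Pen (U : 'I_n -> vec p) := sumI (fun i => sumI (fun j =>
        if ltn i j then w i j * nrm (vsub (U i) (U j)) else 0)).

Lemma term_ge0 (U : 'I_n -> vec p) (i j : 'I_n) : 0 <= (if ltn i j then w i j * nrm (vsub (U i) (U j)) else 0).
Proof.
case E: (ltn i j); last lra.
apply: Rmult_le_pos; [exact: Hw | exact: nrm_ge0].
Qed.

Lemma Pen_ge0 (U : 'I_n -> vec p) : 0 <= Pen U.
Proof. apply: sumI_ge0 => i; apply: sumI_ge0 => j; exact: term_ge0. Qed.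

Lemma edge_le (U : 'I_n -> vec p) (i j : 'I_n) : ltn i j -> w i j * nrm (vsub (U i) (U j)) <= Pen U.
Proof.
move=> ij.
have h1 : (if ltn i j then w i j * nrm (vsub (U i) (U j)) else 0) <=
   sumI (fun j => if ltn i j then w i j * nrm (vsub (U i) (U j)) else 0).
  apply: (sumI_term (fun j => if ltn i j then w i j * nrm (vsub (U i) (U j)) else 0)) => k.
  exact: term_ge0.
rewrite ij in h1. apply: Rle_trans h1 _.
apply: (sumI_term (fun i => sumI (fun j => if ltn i j then w i j * nrm (vsub (U i) (U j)) else 0))) => k.
apply: sumI_ge0 => l; exact: term_ge0.
Qed.

Lemma vsub_self (u : vec p) : vsub u u = zv.
Proof. apply: functional_extensionality => k; rewrite /vsub /zv; ring. Qed.

Lemma path_bound (i j : 'I_n) : clos_refl_trans 'I_n (wedge w) i j ->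
  exists L, 0 <= L /\ forall U, nrm (vsub (U i) (U j)) <= L * Pen U.
Proof.
elim=> {i j} [i j [[ij wp]|[ji wp]]|i|i j k _ [L1 [L10 H1]] _ [L2 [L20 H2]]].
- exists (/ w i j); split; first by apply: Rlt_le; apply: Rinv_0_lt_compat.
  move=> U; have h := edge_le U i j ij.
  have -> : nrm (vsub (U i) (U j)) = / w i j * (w i j * nrm (vsub (U i) (U j))) by field; lra.
  apply: Rmult_le_compat_l h; apply: Rlt_le; exact: Rinv_0_lt_compat.
- exists (/ w j i); split; first by apply: Rlt_le; apply: Rinv_0_lt_compat.
  move=> U; have h := edge_le U j i ji; rewrite (nrm_sym nrm Hn).
  have -> : nrm (vsub (U j) (U i)) = / w j i * (w j i * nrm (vsub (U j) (U i))) by field; lra.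
  apply: Rmult_le_compat_l h; apply: Rlt_le; exact: Rinv_0_lt_compat.
- exists 0; split; first lra. move=> U; rewrite vsub_self (nrm_z nrm Hn). have := Pen_ge0 U; nra.
- exists (L1 + L2); split; first lra.
  move=> U; have := H1 U; have := H2 U; have := nrm_tri nrm Hn (U i) (U j) (U k); lra.
Qed.

Definition a (i : 'I_n) (k : 'I_p) := x i k - mean x k.

Lemma sum_a (Hpos : ltn 0%nat n) k : sumI (fun i => a i k) = 0.
Proof.
rewrite /a (sumI_ext (fun i => x i k - mean x k) (fun i => x i k + (-1 * mean x k))); last by move=> i; ring.
rewrite sumI_add sumI_const /mean.
have : INR n <> 0 by apply: not_0_INR; move=> h; rewrite h in Hpos.
move=> h; field; exact: h.
Qed.

Lemma quad (U : 'I_n -> vec p) i : sqnorm2 (vsub (x i) (mean x)) + 2 * sumI (fun k => a i k * (mean x k - U i k))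
   <= sqnorm2 (vsub (x i) (U i)).
Proof.
rewrite /sqnorm2 -sumI_scal -sumI_add; apply: sumI_le => k; rewrite /vsub /a.
have := Rle_0_sqr (mean x k - U i k); rewrite /Rsqr; nra.
Qed.

Lemma main_aux (Hpos : ltn 0%nat n) (Hc : connected_w w) (c : R) (c0 : 0 <= c)
  (Hlow : forall v k, Rabs (v k) <= c * nrm v) :
  exists gamma0 : R, 0 <= gamma0 /\
    forall gamma : R, gamma0 <= gamma ->
      forall U : 'I_n -> vec p,
        Fgamma nrm x w gamma (fun _ => mean x) <= Fgamma nrm x w gamma U.
Proof.
pose r := Ordinal Hpos.
have HGl : forall l : seq 'I_n, exists G, 0 <= G /\ forall U,
    - lsum l (fun i => sumI (fun k => a i k * (U r k - U i k))) <= G * Pen U.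
  elim => [|i l [G [G0 HG]]].
    exists 0; split; first lra. move=> U; rewrite /lsum /=; have := Pen_ge0 U; nra.
  have [L [L0 HL]] := path_bound r i (Hc r i).
  have S0 : 0 <= sumI (fun k => Rabs (a i k)) by apply: sumI_ge0 => k; exact: Rabs_pos.
  exists (sumI (fun k => Rabs (a i k)) * c * L + G); split.
    have := Rmult_le_pos _ _ (Rmult_le_pos _ _ S0 c0) L0; lra.
  move=> U.
  have t : - sumI (fun k => a i k * (U r k - U i k)) <= sumI (fun k => Rabs (a i k)) * c * L * Pen U.
    apply: Rle_trans (_ : _ <= sumI (fun k => (c * nrm (vsub (U r) (U i))) * Rabs (a i k))) _.
      have -> : forall f : 'I_p -> R, - sumI f = -1 * sumI f by move=> f; ring.
      rewrite -sumI_scal; apply: sumI_le => k.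
      have := Hlow (vsub (U r) (U i)) k; rewrite /vsub => h.
      have := Rabs_pos (a i k). have := Rabs_pos (U r k - U i k).
      have := Rle_abs (- (a i k * (U r k - U i k))); rewrite Rabs_Ropp Rabs_mult.
      have := Rmult_le_compat_l _ _ _ (Rabs_pos (a i k)) h. nra.
    rewrite sumI_scal.
    have h2 := Rmult_le_compat_l _ _ _ c0 (HL U). have h3 := Rmult_le_compat_l _ _ _ S0 h2.
    apply: Rle_trans (_ : _ <= sumI (fun k => Rabs (a i k)) * (c * (L * Pen U))) _; [rewrite Rmult_comm; exact: h3 | right; ring].
  have := HG U. rewrite /lsum /= -/(lsum _ _). lra.
have [G [G0 HG]] := HGl (enum 'I_n).
exists G; split => // gamma hg U.
rewrite /Fgamma.
have -> : sumI (fun i => sumI (fun j =>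
        if ltn i j then w i j * nrm (vsub (mean x) (mean x)) else 0)) = 0.
  rewrite (sumI_ext _ (fun _ => 0)); first by rewrite sumI_const; ring.
  move=> i; rewrite (sumI_ext _ (fun _ => 0)); first by rewrite sumI_const; ring.
  move=> j; rewrite vsub_self (nrm_z nrm Hn); case: (ltn i j); ring.
have Q1 : sumI (fun i => sqnorm2 (vsub (x i) (mean x))) + 2 * sumI (fun i => sumI (fun k => a i k * (mean x k - U i k)))
   <= sumI (fun i => sqnorm2 (vsub (x i) (U i))).
  rewrite -sumI_scal -sumI_add; apply: sumI_le => i; exact: quad.
have Q2 : sumI (fun i => sumI (fun k => a i k * (mean x k - U i k))) =
          sumI (fun i => sumI (fun k => a i k * (U r k - U i k))).
  rewrite (sumI_ext _ (fun i => sumI (fun k => a i k * (mean x k - U r k)) + sumI (fun k => a i k * (U r k - U i k)))); last first.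
    move=> i; rewrite -sumI_add; apply: sumI_ext => k; ring.
  rewrite sumI_add.
  have -> : sumI (fun i => sumI (fun k => a i k * (mean x k - U r k))) = 0; last ring.
  rewrite sumI_swap (sumI_ext _ (fun k => (mean x k - U r k) * sumI (fun i => a i k))); last first.
    move=> k; rewrite -sumI_scal; apply: sumI_ext => i; ring.
  rewrite (sumI_ext _ (fun _ => 0)); first by rewrite sumI_const; ring.
  move=> k; rewrite sum_a //; ring.
have Q3 : - sumI (fun i => sumI (fun k => a i k * (U r k - U i k))) <= G * Pen U := HG U.
have Q4 : 0 <= (gamma - G) * Pen U by apply: Rmult_le_pos; [lra | exact: Pen_ge0].
rewrite -/(Pen U). lra.
Qed.

End Main.

From HB Require Import structures.
From mathcomp Require Import all_boot all_order all_algebra.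
From mathcomp Require Import all_classical all_reals all_analysis.
From mathcomp Require Import Rstruct Rstruct_topology.

Section MC.
Import Order.TTheory GRing.Theory Num.Theory Num.Def numFieldNormedType.Exports.
Local Open Scope classical_set_scope.
Local Open Scope ring_scope.

Lemma rV_coord_le (q : nat) (x : 'rV[R]_q) i : `|x ord0 i| <= `|x|.
Proof.
have /mapP[j Hj ->] : `|x ord0 i| \in [seq `|x z.1 z.2| | z : 'I_1 * 'I_q].
  by apply/mapP; exists (ord0, i) => //=; rewrite mem_enum.
by rewrite [leRHS]/normr /= mx_normrE; apply/bigmax_geP; right => /=; exists j.
Qed.

Lemma nrm_lower_mc p (nrm : vec p -> R) : is_norm nrm ->
  exists c : R, 0 <= c /\ forall v k, `|v k| <= c * nrm v.
Proof.
move=> Hn.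
case: p nrm Hn => [|q] nrm Hn; first by exists 0; split => // v [].
have Hn' := Hn; case: Hn' => Hz [Hs Ht].
pose N := fun x : 'rV[R]_q.+1 => nrm (fun k => x ord0 k).
pose B := sumI (fun k => nrm (delta k)).
have N0 : forall x, 0 <= N x by move=> x; apply/RleP; exact: nrm_ge0.
have B0 : 0 <= B by apply/RleP; apply: lsum_ge0 => k; exact: nrm_ge0.
have NZ : forall a x, N (a *: x) = `|a| * N x.
  move=> a x; rewrite /N.
  have -> : (fun k => (a *: x) ord0 k) = vscale a (fun k => x ord0 k).
    by apply: functional_extensionality => k; rewrite /vscale mxE.
  by rewrite Hs.
have Nup : forall x, N x <= B * `|x|.
  move=> x; apply: le_trans (_ : sumI (fun k => `|x| * nrm (delta k)) <= _).
    rewrite /N; apply/RleP; eapply Rle_trans; first exact: (nrm_upper nrm Hn).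
    apply: lsum_le => k; apply/RleP; apply: ler_wpM2r; first by apply/RleP; exact: nrm_ge0.
    exact: rV_coord_le.
  have E : sumI (fun k => `|x| * nrm (delta k)) = `|x| * B := lsum_scal _ _ _.
  by rewrite E mulrC.
have rev : forall x y, N x - N y <= N (x - y).
  move=> x y; have /RleP := nrm_rev nrm Hn (fun k => x ord0 k) (fun k => y ord0 k).
  suff -> : vsub (fun k => x ord0 k) (fun k => y ord0 k) = (fun k => (x - y) ord0 k) by [].
  by apply: functional_extensionality => k; rewrite /vsub !mxE.
have Nsym : forall x y, N (y - x) = N (x - y).
  by move=> x y; rewrite -opprB -scaleN1r NZ normrN1 mul1r.
have Nlip : forall x y, `|N x - N y| <= B * `|x - y|.
  move=> x y; apply: le_trans (Nup (x - y)).
  rewrite ler_norml rev andbT lerNl opprB -Nsym; exact: rev.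
have Ncont : continuous (N : 'rV[R]_q.+1 -> R^o).
  move=> x; rewrite /continuous_at; apply/(@cvgrPdist_lt _ _ _ (nbhs x) (nbhs_filter x)) => e e0.
  have B1 : 0 < B + 1 by apply: (le_lt_trans B0); rewrite ltrDl.
  have := @cvgr_dist_lt _ _ _ (nbhs x) (nbhs_filter x) id x cvg_id _ (divr_gt0 e0 B1).
  apply: filterS => y hy.
  apply: le_lt_trans (Nlip x y) _.
  apply: le_lt_trans (_ : (B + 1) * `|x - y| < e).
    by apply: ler_wpM2r; [exact: normr_ge0 | rewrite lerDl].
  by rewrite mulrC -ltr_pdivlMr.
have normV1 : forall x : 'rV[R]_q.+1, x != 0 -> `| `|x|^-1 *: x| = 1.
  by move=> x x0; rewrite normrZ normfV normr_id mulVf // normr_eq0.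
pose A := [set x : 'rV[R]_q.+1 | `|x| = 1].
have e0 : const_mx 1 != 0 :> 'rV[R]_q.+1.
  apply/negP => /eqP/matrixP /(_ ord0 ord0); rewrite !mxE => /eqP; by rewrite oner_eq0.
have A0 : A !=set0 by exists (`|(const_mx 1 : 'rV[R]_q.+1)|^-1 *: const_mx 1); exact: normV1.
have cA : compact A.
  apply: bounded_closed_compact.
    rewrite /bounded_near; apply: filterS (nbhs_pinfty_ge (num_real (1 : R))) => M M1 x /= ->; exact: M1.
  apply: (@preimage_closed _ R^o (fun x : 'rV[R]_q.+1 => `|x|) [set 1]); [move=> ? _; exact: norm_continuous | exact: closed_eq].
have cN : {within A, continuous N}.
  apply: continuous_subspaceT => x; exact: Ncont.
have [c cA' cmin] := EVT_min_rV A0 cA cN.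
have m0 : 0 < N c.
  rewrite lt_def N0 andbT; apply/negP => /eqP Nc0.
  have c0 : c = 0.
    apply/matrixP => i j; rewrite ord1 mxE; exact: (Hz _ Nc0 j).
  move: cA'; rewrite inE /A /= c0 normr0 => /eqP; by rewrite eq_sym oner_eq0.
exists (N c)^-1; split; first by rewrite invr_ge0 ltW.
move=> v k.
pose x := \row_j v j.
have Nx : N x = nrm v.
  rewrite /N; congr nrm; apply: functional_extensionality => j; by rewrite mxE.
have vk : v k = x ord0 k by rewrite mxE.
rewrite -Nx vk.
case: (eqVneq x 0) => [->|xn0].
  by rewrite mxE normr0 mulr_ge0 // ?invr_ge0 ?ltW.
have hA : `|x|^-1 *: x \in A by rewrite inE; exact: normV1.
have := cmin _ hA.
rewrite NZ ger0_norm ?invr_ge0 // => hm.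
have h1 := rV_coord_le _ x k. apply: (le_trans h1).
have xp : 0 < `|x| by rewrite normr_gt0.
by rewrite (ler_pdivlMl _ _ m0) (mulrC (N c)) -(ler_pdivlMl _ _ xp).
Qed.

Lemma nrm_lower p (nrm : vec p -> R) : is_norm nrm ->
  exists c : R, Rle 0 c /\ forall v k, Rle (Rabs (v k)) (Rmult c (nrm v)).
Proof.
move=> Hn; have [c [c0 H]] := nrm_lower_mc _ _ Hn.
by exists c; split; [apply/RleP | move=> v k; apply/RleP; exact: H].
Qed.
End MC.

Open Scope R_scope.

Theorem proposition2 (n p : nat) (x : 'I_n -> vec p) (nrm : vec p -> R)
  (w : 'I_n -> 'I_n -> R) :
  is_norm nrm ->
  (forall i j : 'I_n, ltn i j -> 0 <= w i j) ->
  connected_w w ->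
  exists gamma0 : R, 0 <= gamma0 /\
    forall gamma : R, gamma0 <= gamma ->
      forall U : 'I_n -> vec p,
        Fgamma nrm x w gamma (fun _ => mean x) <= Fgamma nrm x w gamma U.
Proof.
move=> Hn Hw Hc.
case: n x w Hw Hc => [|n'] x w Hw Hc.
  exists 0; split; first lra.
  move=> g _ U; rewrite /Fgamma !sumI0; lra.
have [c [c0 Hl]] := nrm_lower _ _ Hn.
exact: (main_aux _ _ x nrm w Hn Hw (ltn0Sn n') Hc c c0 Hl).
Qed.
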